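(* Under the setting of the context, the function $v(i,y)=\sum_{n\ge0}\sum_{j\in E}P^n(i,j)g(j,y)$ is well defined, bounded by $\Gamma(1-c)^{-1}$, and twice continuously differentiable in $y$ with bounded derivatives. In particular, $v$ is Lipschitz continuous in $y$, uniformly in $i\in E$.
   Context: Let $d\ge1$, $(e_1,\dots,e_d)$ the canonical basis of $\mathbb R^d$, $\mathcal V=\{\pm e_1,\dots,\pm e_d\}$. Let $E$ be a finite set and $P$ an irreducible and aperiodic stochastic matrix on $E$ with unique invariant probability $\mu$; let $\Gamma>0$ and $c\in(0,1)$ be constants such that $\sum_{j\in E}|P^n(i,j)-\mu(j)|\le\Gamma c^n$ for all $n\ge0$, $i\in E$. For each $k\in E$, $y\in\mathbb R^d$, $p(k,y,\cdot)$ is a probability on $\mathcal V$, with $y\mapsto p(k,y,u)$ twice continuously differentiable with bounded derivatives. Let $g(k,y)=\sum_{u\in\mathcal V}u\,p(k,y,u)$ and assume $\sum_k\mu(k)g(k,y)=0$ for all $y\in\mathbb R^d$. *)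

(* Defs.v *)
From HB Require Import structures.
From mathcomp Require Import all_boot all_order all_algebra.
From mathcomp Require Import all_classical all_reals all_analysis.
Set Implicit Arguments. Unset Strict Implicit. Unset Printing Implicit Defensive.
Import Order.TTheory GRing.Theory Num.Theory.
Import numFieldNormedType.Exports.
Local Open Scope ring_scope.

Section Defs.
Variable R : realType.

Definition basisv (d : nat) (a : 'I_d) : 'rV[R]_d := delta_mx 0 a.

(* The set V = {+-e_1,...,+-e_d} is indexed by 'I_d * bool:
   (a, true) |-> e_a, (a, false) |-> - e_a. *)
Definition dirvec (d : nat) (u : 'I_d * bool) : 'rV[R]_d :=
  (if u.2 then 1 else -1) *: basisv u.1.

Definition partial (d : nat) (a : 'I_d) (f : 'rV[R]_d -> R) : 'rV[R]_d -> R :=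
  fun y => 'D_(basisv a) f y.

Definition C2_bounded (d : nat) (f : 'rV[R]_d -> R) : Prop :=
  [/\ (forall y, differentiable f y),
      (forall a y, differentiable (partial a f) y),
      (forall a b, continuous (partial b (partial a f))),
      (exists M : R, forall a y, `|partial a f y| <= M) &
      (exists M : R, forall a b y, `|partial b (partial a f) y| <= M)].

Definition stochastic (N : nat) (P : 'M[R]_N) : Prop :=
  (forall i j, 0 <= P i j) /\ (forall i, \sum_j P i j = 1).

Definition irreducible (N : nat) (P : 'M[R]_N) : Prop :=
  forall i j, exists n : nat, 0 < (P ^+ n) i j.

(* the period of each state (gcd of its return times) equals 1 *)
Definition aperiodic (N : nat) (P : 'M[R]_N) : Prop :=
  forall i m : nat, forall Hi : (i < N)%N,
    (forall n : nat, (0 < n)%N -> 0 < (P ^+ n) (Ordinal Hi) (Ordinal Hi) ->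
       (m %| n)%N) -> m = 1%N.

Definition invariant_prob (N : nat) (P : 'M[R]_N) (mu : 'I_N -> R) : Prop :=
  [/\ (forall j, 0 <= mu j), \sum_j mu j = 1 &
      forall j, \sum_i mu i * P i j = mu j].

Definition drift (d N : nat) (p : 'I_N -> 'rV[R]_d -> 'I_d * bool -> R)
  (k : 'I_N) (y : 'rV[R]_d) : 'rV[R]_d :=
  \sum_(u : 'I_d * bool) p k y u *: dirvec u.

Definition vterm (d N : nat) (P : 'M[R]_N)
  (p : 'I_N -> 'rV[R]_d -> 'I_d * bool -> R) (i : 'I_N) (y : 'rV[R]_d)
  (n : nat) : 'rV[R]_d :=
  \sum_j (P ^+ n) i j *: drift p j y.

Definition vsol (d N : nat) (P : 'M[R]_N)
  (p : 'I_N -> 'rV[R]_d -> 'I_d * bool -> R) (i : 'I_N) (y : 'rV[R]_d)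
  : 'rV[R]_d :=
  limn (series (vterm P p i y)).

End Defs.

(* Main.v *)
Require Import Defs.
From HB Require Import structures.
From mathcomp Require Import all_boot all_order all_algebra.
From mathcomp Require Import all_classical all_reals all_analysis.
Import Order.TTheory GRing.Theory Num.Theory.
Import numFieldNormedType.Exports.
Local Open Scope ring_scope.
Local Open Scope classical_set_scope.
Local Open Scope ring_scope.
Section C2.
Variables (R : realType) (d : nat).
Implicit Types f g : 'rV[R]_d -> R.

Lemma partialD f g a : (forall y, differentiable f y) -> (forall y, differentiable g y) ->
  partial a (f + g) = partial a f + partial a g.
Proof.
move=> df dg; apply/funext => y /=.
by rewrite /partial deriveD //; apply: diff_derivable.
Qed.

Lemma partialZ f (k : R) a : (forall y, differentiable f y) ->
  partial a (k \*: f) = k \*: partial a f.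
Proof.
move=> df; apply/funext => y /=.
rewrite /partial /=.
exact: (deriveZ k (@diff_derivable _ _ _ f y (basisv R a) (df y))).
Qed.

Lemma C2_add f g : C2_bounded f -> C2_bounded g -> C2_bounded (f + g).
Proof.
move=> [df ddf cf [M1 hM1] [M2 hM2]] [dg ddg cg [N1 hN1] [N2 hN2]].
have pD a : partial a (f + g) = partial a f + partial a g by exact: partialD.
split.
- by move=> y; apply: differentiableD.
- by move=> a y; rewrite pD; apply: differentiableD.
- move=> a b; rewrite pD partialD; [|exact: ddf|exact: ddg].
  by move=> y; apply: continuousD; [exact: cf|exact: cg].
- exists (M1 + N1) => a y; rewrite pD /=.
  by apply: le_trans (ler_normD _ _) _; apply: lerD.
- exists (M2 + N2) => a b y; rewrite pD partialD /=; [|exact: ddf|exact: ddg].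
  by apply: le_trans (ler_normD _ _) _; apply: lerD.
Qed.

Lemma C2_scale f (k : R) : C2_bounded f -> C2_bounded (k \*: f).
Proof.
move=> [df ddf cf [M1 hM1] [M2 hM2]].
have pZ a : partial a (k \*: f) = k \*: partial a f by exact: partialZ.
have eZ (h : 'rV[R]_d -> R) : k \*: h = k *: h by apply/funext.
split.
- by move=> y; rewrite eZ; apply: differentiableZ.
- by move=> a y; rewrite pZ eZ; apply: differentiableZ.
- move=> a b; rewrite pZ partialZ; last exact: ddf.
  move=> y; apply: (continuousM (s := cst k)); [exact: cst_continuous|exact: cf].
- exists (`|k| * M1) => a y; rewrite pZ /= normrM.
  by apply: ler_wpM2l => //.
- exists (`|k| * M2) => a b y; rewrite pZ partialZ /=; last exact: ddf.
  rewrite normrM.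
  by apply: ler_wpM2l => //.
Qed.

Lemma C2_zero : C2_bounded (fun _ : 'rV[R]_d => (0:R)).
Proof.
have p0 a (h : 'rV[R]_d -> R) : h = cst 0 -> partial a h = cst 0.
  by move=> ->; apply/funext => y; rewrite /partial derive_cst.
have z : (fun _ : 'rV[R]_d => (0:R)) = cst 0 by [].
split.
- by move=> y; rewrite z.
- by move=> a y; rewrite (p0 a _ z).
- by move=> a b; rewrite (p0 b _ (p0 a _ z)); apply: cst_continuous.
- by exists 0 => a y; rewrite (p0 a _ z) normr0.
- by exists 0 => a b y; rewrite (p0 b _ (p0 a _ z)) normr0.
Qed.

Arguments C2_add {f g}.
Lemma C2_sum (I : Type) (r : seq I) (F : I -> 'rV[R]_d -> R) :
  (forall i, C2_bounded (F i)) -> C2_bounded (fun y => \sum_(i <- r) F i y).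
Proof.
move=> hF; elim: r => [|i r IH].
  by under eq_fun do rewrite big_nil; exact: C2_zero.
under eq_fun do rewrite big_cons.
exact: (C2_add (hF i) IH).
Qed.

End C2.
Section Lip.
Variables (R : realType) (d : nat).

Lemma entry_le_norm (m n : nat) (A : 'M[R]_(m, n)) i j : `|A i j| <= `|A|.
Proof.
rewrite [leRHS]/Num.Def.normr/= mx_normrE.
by apply: le_trans (le_bigmax _ _ (i, j)).
Qed.

Lemma norm_le_entries (m n : nat) (A : 'M[R]_(m, n)) e :
  0 <= e -> (forall i j, `|A i j| <= e) -> `|A| <= e.
Proof.
move=> e0 h; rewrite [leLHS]/Num.Def.normr/= mx_normrE.
by apply: bigmax_le => // -[i j] _; exact: h.
Qed.

Lemma step_lip (f : 'rV[R]_d -> R) (a : 'I_d) (M : R) :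
  (forall y, differentiable f y) -> (forall y, `|partial a f y| <= M) ->
  forall w s, `|f (s *: basisv R a + w) - f w| <= M * `|s|.
Proof.
move=> df hM w s.
set e := basisv R a.
pose g := fun t : R => f (t *: e + w).
have E t : (fun h : R => h^-1 *: ((g \o shift t) (h *: 1) - g t)) =
           (fun h : R => h^-1 *: ((f \o shift (t *: e + w)) (h *: e) - f (t *: e + w))).
  apply/funext => h /=; rewrite /g /shift /= scalerDl addrA.
  by congr (_ *: (f (_ + _ + _) - _)); rewrite /GRing.scale /= mulr1.
have dg (t : R) : is_derive t (1:R) g ('D_e f (t *: e + w)).
  apply: DeriveDef.
    by rewrite /derivable E; apply: diff_derivable.
  by rewrite /derive E.
have cg (i : interval R) : {within [set` i], continuous g}.
  apply: derivable_within_continuous => t _.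
  exact: (@ex_derive _ _ _ _ _ _ _ (dg t)).
have g0 : g 0 = f w by rewrite /g scale0r add0r.
have gs : g s = f (s *: e + w) by [].
rewrite -gs -g0.
have [s0|s0] := leP 0 s.
  have [c _ ->] := MVT_segment s0 (fun x _ => dg x) (cg _).
  by rewrite normrM subr0; apply: ler_wpM2r => //; exact: hM.
have [c _ E2] := MVT_segment (ltW s0) (fun x _ => dg x) (cg _).
by rewrite distrC E2 normrM sub0r normrN; apply: ler_wpM2r => //; exact: hM.
Qed.

Lemma lip_of_C2 (f : 'rV[R]_d -> R) : C2_bounded f ->
  exists L : R, forall y z, `|f y - f z| <= L * `|y - z|.
Proof.
move=> [df _ _ [M hM] _].
exists (d%:R * M) => y z.
pose w (k : nat) : 'rV[R]_d := \row_b (if (b < k)%N then y 0 b else z 0 b).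
have wS (k : 'I_d) : w k.+1 = (y 0 k - z 0 k) *: basisv R k + w k.
  apply/rowP => b; rewrite !mxE /=.
  have [bk|bk|bk] := ltngtP b k.
  - by rewrite ltnS (ltnW bk) -val_eqE /= (ltn_eqF bk) mulr0 add0r.
  - rewrite ltnS leqNgt bk /=.
    by rewrite -val_eqE /= (gtn_eqF bk) mulr0 add0r.
  - have -> : b = k := val_inj bk.
    by rewrite ltnSn eqxx mulr1 subrK.
have w0 : w 0%N = z by apply/rowP => b; rewrite !mxE.
have wd : w d = y by apply/rowP => b; rewrite !mxE ltn_ord.
have -> : f y - f z = \sum_(k < d) (f (w k.+1) - f (w k)).
  rewrite -wd -w0 -(telescope_sumr (fun k => f (w k)) (leq0n d)).
  by rewrite big_mkord.
apply: le_trans (ler_norm_sum _ _ _) _.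
apply: le_trans (_ : \sum_(k < d) M * `|y - z| <= _); last first.
  by rewrite sumr_const card_ord -mulrA mulr_natl.
apply: ler_sum => k _.
rewrite wS.
apply: le_trans (@step_lip f k M df (fun y => hM k y) _ _) _.
apply: ler_wpM2l.
  by apply: le_trans (hM k y); apply: normr_ge0.
have -> : y 0 k - z 0 k = (y - z) 0 k by rewrite !mxE.
exact: entry_le_norm.
Qed.
End Lip.
Lemma dirvec_norm (R : realType) (d : nat) (u : 'I_d * bool) : `|dirvec R u| <= 1.
Proof.
rewrite /dirvec mx_normZ.
have -> : `|(if u.2 then 1 else -1 : R)| = 1 by case: u.2; rewrite ?normrN normr1.
rewrite mul1r; apply: norm_le_entries => // i j; rewrite /basisv mxE.
by case: (_ && _); rewrite ?normr1 ?normr0.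
Qed.

Lemma drift_norm (R : realType) (d N : nat) (p : 'I_N -> 'rV[R]_d -> 'I_d * bool -> R)
  (hp0 : forall k y u, 0 <= p k y u) (hp1 : forall k y, \sum_u p k y u = 1) k y :
  `|drift p k y| <= 1.
Proof.
rewrite /drift; apply: le_trans (ler_norm_sum _ _ _) _.
rewrite -(hp1 k y); apply: ler_sum => u _.
rewrite normrZ ger0_norm //.
by rewrite -[leRHS]mulr1; apply: ler_wpM2l => //; exact: dirvec_norm.
Qed.

Theorem lemma4p2 (R : realType) (d N : nat) (hd : (1 <= d)%N)
  (P : 'M[R]_N) (mu : 'I_N -> R) (Gamma c : R)
  (p : 'I_N -> 'rV[R]_d -> 'I_d * bool -> R)
  (hP : stochastic P) (hirr : irreducible P) (haper : aperiodic P)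
  (hmu : invariant_prob P mu)
  (hmu_uniq : forall nu, invariant_prob P nu -> nu =1 mu)
  (hGamma : 0 < Gamma) (hc0 : 0 < c) (hc1 : c < 1)
  (hmix : forall (n : nat) (i : 'I_N),
      \sum_j `|(P ^+ n) i j - mu j| <= Gamma * c ^+ n)
  (hp0 : forall k y u, 0 <= p k y u)
  (hp1 : forall k y, \sum_u p k y u = 1)
  (hpC2 : forall k u, C2_bounded (fun y => p k y u))
  (hcenter : forall y, \sum_k mu k *: drift p k y = 0) :
  [/\ (forall i y, cvgn (series (vterm P p i y))),
      (forall i y, `|vsol P p i y| <= Gamma / (1 - c)),
      (forall i (a : 'I_d), C2_bounded (fun y => vsol P p i y 0 a)) &
      (exists L : R, forall i y z, `|vsol P p i y - vsol P p i z| <= L * `|y - z|)].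
Proof.
pose u (i j : 'I_N) (n : nat) : R := (P ^+ n) i j - mu j.
have hu i j n : `|u i j n| <= Gamma * c ^+ n.
  apply: le_trans (hmix n i); rewrite (bigD1 j) //= lerDl.
  by apply: sumr_ge0 => k _.
have cu i j : cvgn (series (u i j)).
  apply: normed_cvg.
  apply: (@series_le_cvg _ _ (geometric Gamma c)).
  - by move=> n /=.
  - by move=> n; rewrite /geometric /=; apply: mulr_ge0; [exact: ltW|apply: exprn_ge0; exact: ltW].
  - by move=> n; exact: hu.
  - by apply: is_cvg_geometric_series; rewrite gtr0_norm.
pose Z i j := limn (series (u i j)).
have vtermE i y n : vterm P p i y n = \sum_j u i j n *: drift p j y.
  rewrite /vterm /u.
  under [RHS]eq_bigr do rewrite scalerBl.
  by rewrite sumrB hcenter subr0.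
have seriesE i y : series (vterm P p i y) =
    (fun n => \sum_j series (u i j) n *: drift p j y).
  apply/funext => n; rewrite seriesEord /=.
  under eq_bigr do rewrite vtermE.
  rewrite exchange_big /=; apply: eq_bigr => j _.
  by rewrite seriesEord /= scaler_suml.
have cvgV i y : series (vterm P p i y) @ \oo --> \sum_j Z i j *: drift p j y.
  rewrite seriesE.
  apply: cvg_big.
  - exact: add_continuous.
  - move=> j _; apply: cvgZ; last exact: cvg_cst.
    exact: cu.
have vsolE i y : vsol P p i y = \sum_j Z i j *: drift p j y.
  by rewrite /vsol; apply: cvg_lim.
have C2v i a : C2_bounded (fun y => vsol P p i y 0 a).
  have -> : (fun y => vsol P p i y 0 a) = (fun y => \sum_j Z i j * \sum_(v : 'I_d * bool) dirvec R v 0 a * p j y v).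
    apply/funext => y; rewrite vsolE summxE; apply: eq_bigr => j _.
    rewrite mxE /drift summxE; congr (_ * _); apply: eq_bigr => v _.
    by rewrite mxE mulrC.
  apply: C2_sum => j.
  exact (@C2_scale R d _ (Z i j) (@C2_sum R d _ _ _ (fun v => @C2_scale R d _ (dirvec R v 0 a) (hpC2 j v)))).
split.
- by move=> i y; apply/cvg_ex; eexists; exact: cvgV.
- move=> i y.
  have hv n : `|vterm P p i y n| <= Gamma * c ^+ n.
    rewrite vtermE; apply: le_trans (ler_norm_sum _ _ _) _.
    apply: le_trans (hmix n i); apply: ler_sum => j _.
    rewrite normrZ -[leRHS]mulr1; apply: ler_wpM2l => //; exact: drift_norm.
  have hs n : `|series (vterm P p i y) n| <= Gamma / (1 - c).
    rewrite seriesEord /=; apply: le_trans (ler_norm_sum _ _ _) _.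
    apply: le_trans (_ : \sum_(k < n) geometric Gamma c k <= _).
      by apply: ler_sum => k _; exact: hv.
    have -> : \sum_(k < n) geometric Gamma c k = series (geometric Gamma c) n.
      by rewrite seriesEord.
    rewrite geometric_seriesE ?lt_eqF //=.
    apply: ler_wpM2r; first by rewrite invr_ge0 subr_ge0 ltW.
    rewrite -[leRHS]mulr1; apply: ler_wpM2l; first exact: ltW.
    by rewrite gerBl exprn_ge0 // ltW.
  have cv : cvgn (series (vterm P p i y)) by apply/cvg_ex; eexists; exact: cvgV.
  rewrite /vsol -lim_norm //.
  apply: limr_le; first exact: is_cvg_norm.
  by apply: nearW => n; exact: hs.
- exact: C2v.
- have hL : forall ia : 'I_N * 'I_d, exists L : R, forall y z,
      `|vsol P p ia.1 y 0 ia.2 - vsol P p ia.1 z 0 ia.2| <= L * `|y - z|.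
    by move=> [i a]; exact: lip_of_C2 (C2v i a).
  have [Lf hLf] := choice hL.
  exists (\sum_ia `|Lf ia|) => i y z.
  apply: norm_le_entries.
    by apply: mulr_ge0; [apply: sumr_ge0 | apply: normr_ge0].
  move=> i0 a; rewrite (ord1 i0) !mxE.
  apply: le_trans (hLf (i, a) y z) _.
  apply: ler_wpM2r => //.
  apply: le_trans (ler_norm _) _.
  by rewrite (bigD1 (i, a)) //= lerDl sumr_ge0.
Qed.
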